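(* Let $(X,\mathcal{B},\mu)$ be a probability space and $T_1,\dots,T_k$ measurable transformations of $(X,\mathcal{B})$ with $T_i$-invariant probability measures $\mu_i$ equivalent to $\mu$. Let $\nu$ be a probability measure on $(X,\mathcal{B})$ equivalent to $\mu$. If $T_1,\dots,T_k$ are jointly mixing with respect to $(\mu;\mu_1,\dots,\mu_k)$, then they are jointly mixing with respect to $(\nu;\mu_1,\dots,\mu_k)$.
   Context: $T_1,\dots,T_k$ are jointly mixing with respect to $(\mu;\mu_1,\dots,\mu_k)$ if for all $A_0,\dots,A_k\in\mathcal{B}$, $\lim_{n\to\infty}\mu(A_0\cap T_1^{-n}A_1\cap\cdots\cap T_k^{-n}A_k)=\mu(A_0)\prod_{i=1}^k\mu_i(A_i)$. *)

(* Defs.v *)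
From HB Require Import structures.
From mathcomp Require Import all_boot all_order all_algebra.
From mathcomp Require Import all_classical all_reals all_analysis.
Set Implicit Arguments. Unset Strict Implicit. Unset Printing Implicit Defensive.
Import Order.TTheory GRing.Theory Num.Theory.
Local Open Scope classical_set_scope.
Local Open Scope ereal_scope.

Definition measure_equiv d (X : measurableType d) (R : realType)
  (mu nu : set X -> \bar R) : Prop :=
  forall A : set X, measurable A -> (mu A = 0 <-> nu A = 0).

Definition measure_invariant d (X : measurableType d) (R : realType)
  (mu : set X -> \bar R) (T : X -> X) : Prop :=
  forall A : set X, measurable A -> mu (T @^-1` A) = mu A.

Definition jointly_mixing d (X : measurableType d) (R : realType) (k : nat)
  (T : 'I_k -> X -> X) (mu : set X -> \bar R) (mus : 'I_k -> set X -> \bar R)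
  : Prop :=
  forall (A0 : set X) (A : 'I_k -> set X),
    measurable A0 -> (forall i, measurable (A i)) ->
    (fun n : nat => mu (A0 `&` \bigcap_(i in [set: 'I_k]) (iter n (T i) @^-1` A i)))
      @ \oo --> (mu A0 * \prod_(i < k) mus i (A i)).

(* Main.v *)
Require Import Defs.
From HB Require Import structures.
From mathcomp Require Import all_boot all_order all_algebra.
From mathcomp Require Import all_classical all_reals all_analysis.
From mathcomp Require Import finmap lra measurable_realfun.
Import Order.TTheory GRing.Theory Num.Theory.
Import HBNNSimple.
Local Open Scope classical_set_scope.
Local Open Scope ring_scope.
Local Open Scope ereal_scope.
Lemma cvge_sum_seq (R : realType) (I : Type) (s : seq I) (u : I -> nat -> \bar R)
  (l : I -> \bar R) :
  (forall i n, 0 <= u i n) -> (forall i, 0 <= l i) ->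
  (forall i, u i n @[n --> \oo] --> l i) ->
  (\sum_(i <- s) u i n) @[n --> \oo] --> \sum_(i <- s) l i.
Proof.
move=> u0 l0 ul; elim: s => [|a s IH].
  under eq_fun do rewrite big_nil; rewrite big_nil; exact: cvg_cst.
under eq_fun do rewrite big_cons; rewrite big_cons.
apply: cvgeD.
- by apply: ge0_adde_def; rewrite inE ?sume_ge0.
- exact: (ul a).
- exact: IH.
Qed.
Lemma int_nnsfunE d (X : measurableType d) (R : realType)
  (mu : {measure set X -> \bar R}) (h : {nnsfun X >-> R}) (D : set X) :
  measurable D ->
  \int[mu]_(x in D) (h x)%:E =
  \sum_(y <- fset_set (range h)) (y%:E * mu (h @^-1` [set y] `&` D)).
Proof.
move=> mD.
transitivity (\int[mu]_(x in D) \sum_(y <- fset_set (range h))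
    (y * \1_(h @^-1` [set y]) x)%:E).
  apply: eq_integral => x _; rewrite fimfunE fsbig_finite //= sumEFin //.
rewrite ge0_integral_sum //.
- apply: eq_bigr => y _; rewrite (integralZl_indic_nnsfun _ mD).
  by rewrite (integral_indic mu mD) //; exact: measurable_funPTI.
- move=> y; apply/measurable_realfun.measurable_EFinP; apply: measurable_realfun.measurable_funM => //.
- move=> y x _; rewrite lee_fin indicE; case: (boolP (x \in _)) => [|_].
    by rewrite mulr1 => /set_mem /= <-.
  by rewrite /= mulr0.
Qed.

Lemma nnsfun_term_ge0 d (X : measurableType d) (R : realType)
  (mu : {measure set X -> \bar R}) (h : {nnsfun X >-> R}) (D : set X) (y : R) :
  0 <= y%:E * mu (h @^-1` [set y] `&` D).
Proof.
have [y0|y0] := ltP y 0%R.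
  by rewrite preimage_nnfun0 // set0I measure0 mule0.
by rewrite mule_ge0.
Qed.

Lemma mix_nnsfun d (X : measurableType d) (R : realType)
  (mu : {measure set X -> \bar R}) (h : {nnsfun X >-> R})
  (B : nat -> set X) (c : \bar R) :
  (forall n, measurable (B n)) -> 0 <= c -> c \is a fin_num ->
  (forall A0, measurable A0 -> mu (A0 `&` B n) @[n --> \oo] --> mu A0 * c) ->
  forall S, measurable S ->
  \int[mu]_(x in S `&` B n) (h x)%:E @[n --> \oo] -->
  (\int[mu]_(x in S) (h x)%:E) * c.
Proof.
move=> mB c0 cfin Hmix S mS.
under eq_fun => n do rewrite (@int_nnsfunE _ _ _ mu h _ (measurableI _ _ mS (mB n))).
rewrite int_nnsfunE // ge0_sume_distrl; last by move=> *; exact: nnsfun_term_ge0.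
apply: cvge_sum_seq.
- by move=> *; exact: nnsfun_term_ge0.
- by move=> y; rewrite mule_ge0 // nnsfun_term_ge0.
- move=> y; under eq_fun do rewrite setIA.
  rewrite -muleA; apply: cvgeZl => //; apply: Hmix.
  by apply: measurableI => //; exact: measurable_funPTI.
Qed.
Lemma esandwich (R : realType) (a : nat -> \bar R) (rL rc : R) :
  (0 <= rc <= 1)%R ->
  (forall e : R, (0 < e)%R -> exists I : nat -> \bar R, exists j : R,
     (forall n, I n \is a fin_num) /\
     (forall n, I n <= a n <= I n + e%:E) /\
     (I n @[n --> \oo] --> (j * rc)%:E) /\ (j <= rL <= j + e)%R) ->
  a n @[n --> \oo] --> (rL * rc)%:E.
Proof.
move=> /andP[rc0 rc1] H.
have afin n : a n \is a fin_num.
  have [I [j [Ifin [Ia _]]]] := H 1%R ltr01.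
  have /andP[h1 h2] := Ia n.
  rewrite fin_numElt; apply/andP; split.
    by apply: (lt_le_trans _ h1); move: (Ifin n); rewrite fin_numElt => /andP[].
  apply: (le_lt_trans h2); rewrite -(fineK (Ifin n)) -EFinD; exact: ltey.
apply/fine_cvgP; split; first exact: nearW.
apply/cvgrPdist_le => eps eps0.
have e0 : (0 < eps / 3)%R by rewrite divr_gt0.
have [I [j [Ifin [Ia [Icvg jL]]]]] := H _ e0.
move/fine_cvgP: Icvg => [_ /cvgrPdist_le /(_ _ e0) Inear].
near=> n.
have h5 : (`|(j * rc)%R - fine (I n)| <= eps / 3)%R by near: n.
move: (Ia n) jL h5.
rewrite -(fineK (Ifin n)) -(fineK (afin n)) -EFinD !lee_fin /=.
set i := fine (I n); set an := fine (a n).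
move=> /andP[h1 h2] /andP[h3 h4] h5.
rewrite ler_norml; rewrite ler_norml in h5; move/andP: h5 => [h5 h6].
apply/andP; split; nra.
Unshelve. all: by end_near. Qed.
Lemma approx_int d (X : measurableType d) (R : realType)
  (mu : {measure set X -> \bar R}) (f : X -> \bar R) :
  measurable_fun setT f -> (forall x, 0 <= f x) ->
  \int[mu]_x f x \is a fin_num ->
  forall e : R, (0 < e)%R -> exists h : {nnsfun X >-> R},
   (forall x, (h x)%:E <= f x) /\ \int[mu]_x f x <= \int[mu]_x (h x)%:E + e%:E.
Proof.
move=> mf f0 ffin e e0.
pose g := nnsfun_approx measurableT mf.
have hle n x : (g n x)%:E <= f x.
  by rewrite /g nnsfun_approxE; exact: le_approx.
have cv : \int[mu]_x (g n x)%:E @[n --> \oo] --> \int[mu]_x f x.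
  have -> : \int[mu]_x f x = \int[mu]_x limn (fun n => (g n x)%:E).
    apply: eq_integral => x _; apply/esym/cvg_lim => //.
    exact: (cvg_nnsfun_approx measurableT mf (fun x _ => f0 x)).
  apply: cvg_monotone_convergence => //.
  - by move=> n; apply/measurable_EFinP; exact: measurable_funP.
  - by move=> n x _; rewrite lee_fin.
  - move=> x _ m n mn; rewrite lee_fin.
    by have /lefP := nd_nnsfun_approx measurableT mf mn; apply.
move: cv; rewrite -(fineK ffin) => /fine_cvgP [finI /cvgrPdist_le /(_ _ e0) cvI].
have H2 : \forall n \near \oo, (\int[mu]_x (g n x)%:E \is a fin_num) /\
  (`|fine (\int[mu]_x f x) - fine (\int[mu]_x (g n x)%:E)| <= e)%R.
  by near=> n; split; near: n.
have [N _ HN] := H2.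
have [Nfin Nle] := HN N (leqnn N).
exists (g N); split => //.
rewrite -(fineK ffin) -(fineK Nfin) -EFinD lee_fin.
by move: Nle; rewrite ler_norml => /andP[_]; lra.
Unshelve. all: by end_near. Qed.
Lemma gap_int d (X : measurableType d) (R : realType)
  (mu : {measure set X -> \bar R}) (f : X -> \bar R) (h : {nnsfun X >-> R}) (e : R) :
  measurable_fun setT f -> (forall x, f x \is a fin_num) ->
  (forall x, (h x)%:E <= f x) ->
  \int[mu]_x f x \is a fin_num ->
  \int[mu]_x f x <= \int[mu]_x (h x)%:E + e%:E ->
  forall S, measurable S ->
  \int[mu]_(x in S) (h x)%:E <= \int[mu]_(x in S) f x <= \int[mu]_(x in S) (h x)%:E + e%:E.
Proof.
move=> mf ffin hf Ifin Ile S mS.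
have mfB D : measurable D -> measurable_fun D (fun x => f x - (h x)%:E).
  move=> mD; apply: emeasurable_funB.
    exact: (measurable_funS measurableT (@subsetT _ D) mf).
  by apply/measurable_EFinP; exact: measurable_funP.
have gB0 x : 0 <= f x - (h x)%:E by rewrite sube_ge0 ?hf.
have dec D : measurable D -> \int[mu]_(x in D) f x =
    \int[mu]_(x in D) (h x)%:E + \int[mu]_(x in D) (f x - (h x)%:E).
  move=> mD; rewrite -ge0_integralD //.
  - by apply: eq_integral => x _; rewrite addeC subeK.
  - by move=> x _; rewrite lee_fin.
  - by apply/measurable_EFinP; exact: measurable_funP.
  - exact: (mfB _ mD).
have gS := @ge0_subset_integral _ _ _ mu _ _ mS measurableT
  (fun x => f x - (h x)%:E) (mfB _ measurableT) (fun x _ => gB0 x) (@subsetT _ S).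
have hfin : \int[mu]_x (h x)%:E \is a fin_num.
  rewrite ge0_fin_numE; last by apply: integral_ge0 => x _; rewrite lee_fin.
  apply: (le_lt_trans _ (_ : \int[mu]_x f x < +oo)).
    apply: ge0_le_integral => //.
    - by move=> x _; rewrite lee_fin.
    - by apply/measurable_EFinP; exact: measurable_funP.
  by rewrite ltey_eq Ifin.
have gle : \int[mu]_x (f x - (h x)%:E) <= e%:E.
  by move: Ile; rewrite (dec _ measurableT) leeD2lE.
rewrite (dec _ mS); apply/andP; split.
  by apply: leeDl; apply: integral_ge0 => x _; exact: gB0.
by apply: leeD2l; exact: (le_trans gS gle).
Qed.
Arguments approx_int {d X R mu f}.
Arguments gap_int {d X R mu f h e}.
Arguments mix_nnsfun {d X R mu h B c}.

Theorem lemma6p2 (d : measure_display) (X : measurableType d) (R : realType)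
  (k : nat) (mu : probability X R) (T : 'I_k -> X -> X)
  (mus : 'I_k -> probability X R) (nu : probability X R) :
  (forall i, measurable_fun setT (T i)) ->
  (forall i, measure_invariant (mus i) (T i)) ->
  (forall i, measure_equiv (mus i) mu) ->
  measure_equiv nu mu ->
  jointly_mixing T mu (fun i => mus i) ->
  jointly_mixing T nu (fun i => mus i).
Proof.
move=> mT _ _ hnu hmix A0 A mA0 mA.
pose B n := \bigcap_(i in [set: 'I_k]) (iter n (T i) @^-1` A i).
have miter i n : measurable_fun setT (iter n (T i)).
  elim: n => [|n IH]; first exact: measurable_id.
  exact: (measurableT_comp (mT i) IH).
have mB n : measurable (B n).
  apply: fin_bigcap_measurable => // i _.
  by rewrite -[X in measurable X]setTI; exact: (miter i n measurableT _ (mA i)).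
pose c := \prod_(i < k) mus i (A i).
have c01 : 0 <= c <= 1.
  rewrite /c; elim/big_ind: _.
  - by rewrite lee01 lexx.
  - move=> x y /andP[x0 x1] /andP[y0 y1]; rewrite mule_ge0 //=.
    by rewrite -[leRHS](mule1 1) lee_pmul.
  - by move=> i _; rewrite measure_ge0 probability_le1.
have cfin : c \is a fin_num.
  by apply: prode_fin_num => i _; exact: fin_num_measure.
have Hmix S : measurable S -> mu (S `&` B n) @[n --> \oo] --> mu S * c.
  by move=> mS; exact: (hmix S A mS mA).
have numu : nu `<< mu.
  by apply/null_content_dominatesP => S mS /(hnu S mS).2.
have [f [f0 ffin fint fE]] := radon_nikodym_sigma_finite numu.
have mf : measurable_fun setT f by case/integrableP: fint.
have Ifin : \int[mu]_x f x \is a fin_num.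
  by rewrite -fE //; exact: fin_num_measure.
rewrite -/(B _) -/c.
have nA0fin : nu A0 \is a fin_num by exact: fin_num_measure.
rewrite -(fineK nA0fin) -(fineK cfin) -EFinM.
have afin n : nu (A0 `&` B n) \is a fin_num.
  by apply: fin_num_measure; exact: measurableI.
apply: esandwich.
  move: c01; rewrite -(fineK cfin) !lee_fin => /andP[-> ->] //.
move=> e e0.
have [h [hf hle]] := approx_int mf f0 Ifin e e0.
have G := gap_int mf ffin hf Ifin hle.
have Jfin : \int[mu]_(x in A0) (h x)%:E \is a fin_num.
  have /andP[g1 g2] := G _ mA0.
  rewrite ge0_fin_numE; last by apply: integral_ge0 => x _; rewrite lee_fin.
  by apply: (le_lt_trans g1); rewrite -fE // ltey_eq nA0fin.
exists (fun n => \int[mu]_(x in A0 `&` B n) (h x)%:E).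
exists (fine (\int[mu]_(x in A0) (h x)%:E)).
split; [|split; [|split]].
- move=> n; have /andP[g1 g2] := G _ (measurableI _ _ mA0 (mB n)).
  rewrite ge0_fin_numE; last by apply: integral_ge0 => x _; rewrite lee_fin.
  apply: (le_lt_trans g1); rewrite -fE; last exact: measurableI.
  by rewrite ltey_eq afin.
- move=> n; rewrite (fE _ (measurableI _ _ mA0 (mB n))).
  exact: G (measurableI _ _ mA0 (mB n)).
- rewrite EFinM !fineK //; apply: mix_nnsfun => //.
  by move: c01 => /andP[].
- move: (G _ mA0); rewrite -fE // => /andP[g1 g2].
  by rewrite -!lee_fin EFinD !fineK // g1 g2.
Qed.
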